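(* For every real $\beta$, the Laplace–Beltrami operator does not move under the Dirac deformation: $D(t)^2=L$ for all $t\in\mathbb{R}$.
   Context: Let $G$ be a finite simple graph. For $k\ge0$ let $\Omega_k$ be the space of complex-valued functions on the (oriented) $k$-simplices of $G$ (complete subgraphs with $k+1$ vertices), $\Omega=\bigoplus_k\Omega_k$. The exterior derivative $d_0:\Omega_k\to\Omega_{k+1}$ is $(d_0f)(x_0,\dots,x_{k+1})=\sum_{j}(-1)^jf(x_0,\dots,\hat x_j,\dots,x_{k+1})$, $D_0=d_0+d_0^*$ and $L=D_0^2$. For a self-adjoint operator $D$ on $\Omega$ whose blocks $\Omega_k\to\Omega_j$ vanish unless $|j-k|\le1$, write $D=d+d^*+b$ with $d$ the blocks $\Omega_k\to\Omega_{k+1}$ and $b$ the block-diagonal part. The Dirac deformation with real parameter $\beta$ is the solution $D(t)$ of $D'=BD-DB$, $D(0)=D_0$, with $B(t)=d(t)-d(t)^*+i\beta b(t)$, $D(t)=d(t)+d(t)^*+b(t)$ (the solution exists for all real $t$ and keeps this form). *)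

(* Defs.v *)
From HB Require Import structures.
From mathcomp Require Import all_boot all_order all_algebra.
From mathcomp Require Import complex.
From mathcomp Require Import all_classical all_reals all_analysis.
Set Implicit Arguments. Unset Strict Implicit. Unset Printing Implicit Defensive.
Import Order.TTheory GRing.Theory Num.Theory.
Local Open Scope ring_scope.

Definition simple_graph (T : finType) (e : rel T) : Prop :=
  symmetric e /\ irreflexive e.

Definition is_simplex (T : finType) (e : rel T) (x : {set T}) : bool :=
  (0 < #|x|)%N && [forall u in x, forall v in x, (u != v) ==> e u v].

Definition simplex (T : finType) (e : rel T) := {x : {set T} | is_simplex e x}.

Definition sdim (T : finType) (e : rel T) (x : simplex e) : nat := #|val x|.-1.

(* Operators on Omega = (+)_k Omega_k, written as matrices indexed by simplices:
   (A f)(y) = \sum_x A y x * f x.  Each simplex carries the orientation given by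
   increasing order of vertices (order of T via enum_rank); Omega carries the
   standard l^2 inner product (one term per simplex), so adjoint = conjugate
   transpose. *)
Definition op (R : realType) (T : finType) (e : rel T) :=
  simplex e -> simplex e -> R[i].

Section Ops.
Variables (R : realType) (T : finType) (e : rel T).
Local Notation S := (simplex e).
Local Notation op := (op R e).

Definition opmul (A B : op) : op := fun y x => \sum_(z : S) A y z * B z x.
Definition opadd (A B : op) : op := fun y x => A y x + B y x.
Definition opsub (A B : op) : op := fun y x => A y x - B y x.
Definition opscale (c : R[i]) (A : op) : op := fun y x => c * A y x.
Definition opadj (A : op) : op := fun y x => conjc (A x y).

Definition vpos (y : {set T}) (v : T) : nat :=
  #|[set u in y | (val (enum_rank u) < val (enum_rank v))%N]|.

(* exterior derivative d_0 : Omega_k -> Omega_(k+1):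
   (d0 f)(x_0..x_(k+1)) = \sum_j (-1)^j f(x_0..^x_j..x_(k+1)) *)
Definition d0 : op := fun y x =>
  if (val x \subset val y) && (#|val y| == #|val x|.+1)
  then \sum_(v in val y :\: val x) (-1) ^+ vpos (val y) v
  else 0.

Definition D0 : op := opadd d0 (opadj d0).
Definition Lap : op := opmul D0 D0.

Definition dpart (D : op) : op := fun y x =>
  if sdim y == (sdim x).+1 then D y x else 0.
Definition bpart (D : op) : op := fun y x =>
  if sdim y == sdim x then D y x else 0.

Definition Bop (beta : R) (D : op) : op :=
  opadd (opsub (dpart D) (opadj (dpart D))) (opscale (Complex 0 beta) (bpart D)).

(* D is self-adjoint with blocks only for |j-k| <= 1, i.e. D = d + d^* + b *)
Definition dirac_form (D : op) : Prop :=
  D = opadd (opadd (dpart D) (opadj (dpart D))) (bpart D).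

Definition dirac_deformation (beta : R) (D : R -> op) : Prop :=
  D 0 = D0 /\
  (forall t, dirac_form (D t)) /\
  (forall t y x,
     let rhs := opsub (opmul (Bop beta (D t)) (D t)) (opmul (D t) (Bop beta (D t))) in
     is_derive t (1 : R) (fun s => complex.Re (D s y x)) (complex.Re (rhs y x)) /\
     is_derive t (1 : R) (fun s => complex.Im (D s y x)) (complex.Im (rhs y x))).
End Ops.

(* Main.v *)
Require Import Defs.
From HB Require Import structures.
From mathcomp Require Import all_boot all_order all_algebra.
From mathcomp Require Import complex.
From mathcomp Require Import all_classical all_reals all_analysis.
From mathcomp Require Import ring lra zify.
From Stdlib Require Import Lia.
Set Implicit Arguments. Unset Strict Implicit. Unset Printing Implicit Defensive.
Import Order.TTheory GRing.Theory Num.Theory.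
Local Open Scope ring_scope.
Section Real.
Variable R : realType.
Implicit Types (f g : R -> R) (x df dg : R).
Lemma dD f g x df dg : is_derive x (1:R) f df -> is_derive x (1:R) g dg -> is_derive x (1:R) (fun t => f t + g t) (df + dg).
Proof. move=> *. exact: is_deriveD. Qed.
Lemma dM f g x df dg : is_derive x (1:R) f df -> is_derive x (1:R) g dg -> is_derive x (1:R) (fun t => f t * g t) (df * g x + f x * dg).
Proof. move=> h1 h2.
suff -> : df * g x + f x * dg = f x *: dg + g x *: df by exact: is_deriveM.
rewrite /GRing.scale /=. ring.
Qed.
Lemma dN f x df : is_derive x (1:R) f df -> is_derive x (1:R) (fun t => - f t) (- df).
Proof. move=> *. exact: is_deriveN. Qed.
Lemma dB f g x df dg : is_derive x (1:R) f df -> is_derive x (1:R) g dg -> is_derive x (1:R) (fun t => f t - g t) (df - dg).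
Proof. move=> h1 h2; exact: dD h1 (dN h2). Qed.
Lemma dC (c : R) x : is_derive x (1:R) (fun _ => c) 0.
Proof. exact: is_derive_cst. Qed.
Lemma dI x : is_derive x (1:R) (fun t => t) 1.
Proof. exact: is_derive_id. Qed.
Lemma dext f g x df : (forall t, f t = g t) -> is_derive x (1:R) f df -> is_derive x (1:R) g df.
Proof. by move=> /funext ->. Qed.
Lemma dval f x df df' : is_derive x (1:R) f df -> df = df' -> is_derive x (1:R) f df'.
Proof. by move=> ? <-. Qed.

Lemma dsum (I : Type) (r : seq I) (P : pred I) (h : I -> R -> R) (dh : I -> R) x :
  (forall i, is_derive x (1:R) (h i) (dh i)) ->
  is_derive x (1:R) (fun t => \sum_(i <- r | P i) h i t) (\sum_(i <- r | P i) dh i).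
Proof.
move=> H; elim: r => [|a r IH].
  apply: (@dext (fun _ => 0)) => [t|]; first by rewrite big_nil.
  rewrite big_nil; exact: dC.
apply: (@dext (fun t => (if P a then h a t else 0) + \sum_(i <- r | P i) h i t)).
  by move=> t; rewrite big_cons; case: (P a); rewrite ?add0r.
rewrite big_cons; case: (P a) => /=; first exact: (dD (H a) IH).
have := dD (dC 0 x) IH; rewrite add0r; exact.
Qed.
Lemma gronwall_fwd f f' M : (forall t, is_derive t (1:R) f (f' t)) -> f 0 = 0 ->
  (forall t, 0 <= f t) -> forall T, 0 <= T ->
  (forall t, 0 <= t <= T -> f' t <= M * f t) -> f T = 0.
Proof.
move=> hd h0 hpos T hT hb.
pose g s := f s * expR (- (M * s)).
have dg : forall s, is_derive s (1:R) g (f' s * expR (- (M * s)) + f s * (expR (- (M * s)) * (- M))).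
  move=> s; apply: (@dM f (fun t => expR (- (M * t)))).
  have h1 : is_derive s (1:R) (fun t => - (M * t)) (- M).
    have := dN (dM (dC M s) (dI s)); by rewrite mul0r add0r mulr1.
  have := @is_derive1_comp _ expR (fun t => - (M * t)) s _ _ (is_derive_expR _) h1.
  done.
have gle : g T <= g 0.
  apply: (@ler0_derive1_nincr _ g 0 T) => //.
  - move=> x; rewrite in_itv /= => /andP [x0 xT].
    rewrite derive1E (@derive_val _ _ _ _ _ _ _ (dg x)).
    have := hb x; rewrite (ltW x0) (ltW xT) => /(_ isT) H.
    have He := expR_gt0 (- (M * x)).
    nra.
  - apply: derivable_within_continuous => x _; by case: (dg x).
have : g 0 = 0 by rewrite /g h0 mul0r.
move=> g0; rewrite g0 in gle.
have : 0 <= g T by rewrite /g mulr_ge0 // ltW // expR_gt0.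
have He := expR_gt0 (- (M * T)).
rewrite /g => H.
have : f T * expR (- (M * T)) = 0 by apply/eqP; rewrite eq_le gle H.
move/eqP; rewrite mulf_eq0 => /orP [/eqP // | ]; by rewrite gt_eqF.
Qed.

Lemma gronwall f f' : (forall t, is_derive t (1:R) f (f' t)) -> f 0 = 0 ->
  (forall t, 0 <= f t) ->
  (forall T, 0 <= T -> exists M, forall t, - T <= t <= T -> `|f' t| <= M * f t) ->
  forall t, f t = 0.
Proof.
move=> hd h0 hpos hb t; case: (leP 0 t) => ht.
  have [M HM] := hb t ht.
  apply: (gronwall_fwd (M := M)) => // s /andP [s0 st].
  apply: le_trans (ler_norm _) _; apply: HM.
  by rewrite st andbT; apply: le_trans s0; rewrite oppr_le0.
have ht' : 0 <= - t by rewrite oppr_ge0 ltW.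
have [M HM] := hb (- t) ht'.
have hd' : forall s, is_derive s (1:R) (fun u => f (- u)) (- f' (- s)).
  move=> s; have := @is_derive1_comp _ f (fun u => - u) s _ _ (hd (- s)) (is_deriveNid s 1).
  by rewrite mulrN1.
have := @gronwall_fwd (fun u => f (- u)) (fun u => - f' (- u)) M hd' _ _ (- t) ht'.
rewrite opprK; apply => //; first by rewrite oppr0.
move=> s /andP [s0 st]; apply: le_trans (ler_norm _) _; rewrite normrN; apply: HM.
apply/andP; split; lra.
Qed.

Lemma bnd_deriv (phi : R -> R) : (forall t, derivable phi t (1:R)) ->
  forall T, 0 <= T -> exists K, forall t, - T <= t <= T -> `|phi t| <= K.
Proof.
move=> hd T hT.
have hTT : - T <= T by lra.
have cf := @derivable_within_continuous _ _ phi `[- T, T] (fun x _ => hd x).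
have [cM _ HM] := EVT_max hTT cf.
have [cm _ Hm] := EVT_min hTT cf.
exists (`|phi cM| + `|phi cm|) => t tT.
have tin : t \in `[- T, T] by rewrite in_itv /=.
have h1 := HM t tin; have h2 := Hm t tin.
rewrite ler_norml; apply/andP; split.
  have := ler_norm (- phi cm); rewrite normrN => h3.
  have := normr_ge0 (phi cM); lra.
have := ler_norm (phi cM); have := normr_ge0 (phi cm); lra.
Qed.

Lemma bnd_family (I : eqType) (s : seq I) (phi : I -> R -> R) :
  (forall i t, derivable (phi i) t (1:R)) ->
  forall T, 0 <= T -> exists K, forall i t, i \in s -> - T <= t <= T -> `|phi i t| <= K.
Proof.
move=> hd T hT; elim: s => [|a s [K HK]].
  by exists 0 => i t; rewrite in_nil.
have [Ka HKa] := bnd_deriv (hd a) hT.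
exists (`|K| + `|Ka|) => i t; rewrite in_cons => /orP [/eqP -> | his] tT.
  have := HKa t tT; have := normr_ge0 K; have := ler_norm Ka; lra.
have := HK i t his tT; have := ler_norm K; have := normr_ge0 Ka; lra.
Qed.
End Real.
Section Cplx.
Variable R : realType.
Local Notation C := (R[i]).
Local Notation cRe := (@complex.Re R).
Local Notation cIm := (@complex.Im R).
Lemma ReM (x y : C) : cRe (x * y) = cRe x * cRe y - cIm x * cIm y.
Proof. by case: x => a b; case: y => c d /=. Qed.
Lemma ImM (x y : C) : cIm (x * y) = cRe x * cIm y + cIm x * cRe y.
Proof. by case: x => a b; case: y => c d /=. Qed.
Lemma ReD (x y : C) : cRe (x + y) = cRe x + cRe y.
Proof. by case: x => a b; case: y => c d /=. Qed.
Lemma ImD (x y : C) : cIm (x + y) = cIm x + cIm y.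
Proof. by case: x => a b; case: y => c d /=. Qed.
Lemma ReN (x : C) : cRe (- x) = - cRe x.
Proof. by case: x => a b /=. Qed.
Lemma ImN (x : C) : cIm (- x) = - cIm x.
Proof. by case: x => a b /=. Qed.
Lemma Re0 : cRe (0 : C) = 0. Proof. by []. Qed.
Lemma Im0 : cIm (0 : C) = 0. Proof. by []. Qed.
Lemma ReJ (x : C) : cRe (x^*)%C = cRe x. Proof. by case: x => a b /=. Qed.
Lemma ImJ (x : C) : cIm (x^*)%C = - cIm x. Proof. by case: x => a b /=. Qed.
Lemma complex_ext (x y : C) : cRe x = cRe y -> cIm x = cIm y -> x = y.
Proof. by case: x => a b; case: y => c d /= -> ->. Qed.
Lemma Re_sum (I : Type) (r : seq I) (P : pred I) (F : I -> C) :
  cRe (\sum_(i <- r | P i) F i) = \sum_(i <- r | P i) cRe (F i).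
Proof. by apply: (big_morph _ ReD Re0). Qed.
Lemma Im_sum (I : Type) (r : seq I) (P : pred I) (F : I -> C) :
  cIm (\sum_(i <- r | P i) F i) = \sum_(i <- r | P i) cIm (F i).
Proof. by apply: (big_morph _ ImD Im0). Qed.

Definition cder (f : R -> C) (t : R) (df : C) :=
  is_derive t (1:R) (fun s => cRe (f s)) (cRe df) /\ is_derive t (1:R) (fun s => cIm (f s)) (cIm df).

Lemma cder_ext f g t df : (forall s, f s = g s) -> cder f t df -> cder g t df.
Proof. by move=> /funext ->. Qed.
Lemma cder_val f t df df' : cder f t df -> df = df' -> cder f t df'.
Proof. by move=> ? <-. Qed.
Lemma cder_cst (c : C) t : cder (fun _ => c) t 0.
Proof. split; exact: dC. Qed.
Lemma cder_add f g t df dg : cder f t df -> cder g t dg -> cder (fun s => f s + g s) t (df + dg).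
Proof.
move=> [h1 h2] [h3 h4]; split.
  apply: (dext (f := fun s => cRe (f s) + cRe (g s))) => [s|]; first by rewrite ReD.
  by rewrite ReD; exact: dD.
apply: (dext (f := fun s => cIm (f s) + cIm (g s))) => [s|]; first by rewrite ImD.
by rewrite ImD; exact: dD.
Qed.
Lemma cder_opp f t df : cder f t df -> cder (fun s => - f s) t (- df).
Proof.
move=> [h1 h2]; split.
  apply: (dext (f := fun s => - cRe (f s))) => [s|]; first by rewrite ReN.
  by rewrite ReN; exact: dN.
apply: (dext (f := fun s => - cIm (f s))) => [s|]; first by rewrite ImN.
by rewrite ImN; exact: dN.
Qed.
Lemma cder_sub f g t df dg : cder f t df -> cder g t dg -> cder (fun s => f s - g s) t (df - dg).
Proof. by move=> h1 h2; apply: cder_add h1 (cder_opp h2). Qed.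
Lemma cder_mul f g t df dg : cder f t df -> cder g t dg -> cder (fun s => f s * g s) t (df * g t + f t * dg).
Proof.
move=> [h1 h2] [h3 h4]; split.
  apply: (dext (f := fun s => cRe (f s) * cRe (g s) - cIm (f s) * cIm (g s))) => [s|]; first by rewrite ReM.
  apply: (dval (dB (dM h1 h3) (dM h2 h4))).
  rewrite ReD !ReM; ring.
apply: (dext (f := fun s => cRe (f s) * cIm (g s) + cIm (f s) * cRe (g s))) => [s|]; first by rewrite ImM.
apply: (dval (dD (dM h1 h4) (dM h2 h3))).
rewrite ImD !ImM; ring.
Qed.
Lemma cder_conj f t df : cder f t df -> cder (fun s => (f s)^*%C) t (df^*%C).
Proof.
move=> [h1 h2]; split.
  apply: (dext (f := fun s => cRe (f s))) => [s|]; first by rewrite ReJ.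
  by rewrite ReJ.
apply: (dext (f := fun s => - cIm (f s))) => [s|]; first by rewrite ImJ.
by rewrite ImJ; exact: dN.
Qed.
Lemma cder_sum (I : Type) (r : seq I) (P : pred I) (h : I -> R -> C) (dh : I -> C) t :
  (forall i, cder (h i) t (dh i)) ->
  cder (fun s => \sum_(i <- r | P i) h i s) t (\sum_(i <- r | P i) dh i).
Proof.
move=> H; split.
  apply: (dext (f := fun s => \sum_(i <- r | P i) cRe (h i s))) => [s|]; first by rewrite Re_sum.
  rewrite Re_sum; apply: dsum => i; exact: (H i).1.
apply: (dext (f := fun s => \sum_(i <- r | P i) cIm (h i s))) => [s|]; first by rewrite Im_sum.
rewrite Im_sum; apply: dsum => i; exact: (H i).2.
Qed.
Lemma cder_cst0 (f : R -> C) : (forall t, cder f t 0) -> forall t, f t = f 0.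
Proof.
move=> H t; apply: complex_ext.
  apply: (is_derive_0_is_cst (f := fun s => cRe (f s))) => x.
  by have := (H x).1; rewrite Re0.
apply: (is_derive_0_is_cst (f := fun s => cIm (f s))) => x.
by have := (H x).2; rewrite Im0.
Qed.
End Cplx.
Section Mat.
Variable R : realType.
Local Notation C := (R[i]).
Local Notation cRe := (@complex.Re R).
Local Notation cIm := (@complex.Im R).
Variable n : nat.
Local Notation Mat := 'M[C]_n.

Definition adjM (M : Mat) : Mat := \matrix_(i, j) (M j i)^*%C.
Definition mder (F F' : R -> Mat) := forall t i j, cder (fun s => F s i j) t (F' t i j).

Lemma mder_ext F G F' : (forall s, F s = G s) -> mder F F' -> mder G F'.
Proof. by move=> /funext ->. Qed.
Lemma mder_val F F' F'' : mder F F' -> (forall t, F' t = F'' t) -> mder F F''.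
Proof. by move=> h /funext <-. Qed.
Lemma mder_add F G F' G' : mder F F' -> mder G G' -> mder (fun s => F s + G s) (fun s => F' s + G' s).
Proof.
move=> h1 h2 t i j; apply: (cder_ext (f := fun s => F s i j + G s i j)) => [s|]; first by rewrite mxE.
by rewrite mxE; apply: cder_add.
Qed.
Lemma mder_opp F F' : mder F F' -> mder (fun s => - F s) (fun s => - F' s).
Proof.
move=> h1 t i j; apply: (cder_ext (f := fun s => - F s i j)) => [s|]; first by rewrite mxE.
by rewrite mxE; apply: cder_opp.
Qed.
Lemma mder_sub F G F' G' : mder F F' -> mder G G' -> mder (fun s => F s - G s) (fun s => F' s - G' s).
Proof. by move=> h1 h2; apply: mder_add h1 (mder_opp h2). Qed.
Lemma mder_mul F G F' G' : mder F F' -> mder G G' ->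
  mder (fun s => F s *m G s) (fun s => F' s *m G s + F s *m G' s).
Proof.
move=> h1 h2 t i j.
apply: (cder_ext (f := fun s => \sum_k F s i k * G s k j)) => [s|]; first by rewrite mxE.
apply: cder_val; first (apply: cder_sum => k; exact: cder_mul (h1 t i k) (h2 t k j)).
by rewrite !mxE -big_split.
Qed.
Lemma mder_scale (c : C) F F' : mder F F' -> mder (fun s => c *: F s) (fun s => c *: F' s).
Proof.
move=> h1 t i j; apply: (cder_ext (f := fun s => c * F s i j)) => [s|]; first by rewrite mxE.
apply: cder_val; first exact: cder_mul (cder_cst c t) (h1 t i j).
by rewrite mxE mul0r add0r.
Qed.
Lemma mder_adj F F' : mder F F' -> mder (fun s => adjM (F s)) (fun s => adjM (F' s)).
Proof.
move=> h1 t i j; apply: (cder_ext (f := fun s => (F s j i)^*%C)) => [s|]; first by rewrite mxE.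
by rewrite mxE; apply: cder_conj.
Qed.
Lemma mder_cst0 F : mder F (fun _ => 0) -> forall t, F t = F 0.
Proof.
move=> h t; apply/matrixP => i j.
apply: (cder_cst0 (f := fun s => F s i j)) => x.
by have := h x i j; rewrite /= mxE.
Qed.
End Mat.
Section MGron.
Variable R : realType.
Local Notation C := (R[i]).
Local Notation cRe := (@complex.Re R).
Local Notation cIm := (@complex.Im R).

Definition nc (z : C) : R := cRe z * cRe z + cIm z * cIm z.
Definition dotc (x y : C) : R := cRe x * cRe y + cIm x * cIm y.
Lemma nc_ge0 z : 0 <= nc z.
Proof. by rewrite /nc addr_ge0 // -expr2 sqr_ge0. Qed.
Lemma dotcD x y z : dotc x (y + z) = dotc x y + dotc x z.
Proof. rewrite /dotc ReD ImD; ring. Qed.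
Lemma dotcN x y : dotc x (- y) = - dotc x y.
Proof. rewrite /dotc ReN ImN; ring. Qed.
Lemma dotc0 x : dotc x 0 = 0.
Proof. rewrite /dotc Re0 Im0; ring. Qed.
Lemma dotc_sum x (I : Type) (r : seq I) (P : pred I) (F : I -> C) :
  dotc x (\sum_(i <- r | P i) F i) = \sum_(i <- r | P i) dotc x (F i).
Proof. by apply: (big_morph _ (dotcD x) (dotc0 x)). Qed.

Lemma dot_bound x y w K : `|cRe w| <= K -> `|cIm w| <= K ->
  `|dotc x (y * w)| <= K * (nc x + nc y).
Proof.
move=> h1 h2.
have -> : dotc x (y * w) = cRe w * (cRe x * cRe y + cIm x * cIm y) + cIm w * (cIm x * cRe y - cRe x * cIm y).
  rewrite /dotc ReM ImM; ring.
set A := (cRe x * cRe y + cIm x * cIm y).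
set B := (cIm x * cRe y - cRe x * cIm y).
have hA : `|A| <= (nc x + nc y) / 2.
  rewrite ler_norml /A /nc.
  have := sqr_ge0 (cRe x - cRe y); have := sqr_ge0 (cIm x - cIm y).
  have := sqr_ge0 (cRe x + cRe y); have := sqr_ge0 (cIm x + cIm y).
  rewrite !expr2 => *; apply/andP; split; nra.
have hB : `|B| <= (nc x + nc y) / 2.
  rewrite ler_norml /B /nc.
  have := sqr_ge0 (cIm x - cRe y); have := sqr_ge0 (cRe x + cIm y).
  have := sqr_ge0 (cIm x + cRe y); have := sqr_ge0 (cRe x - cIm y).
  rewrite !expr2 => *; apply/andP; split; nra.
apply: le_trans (ler_normD _ _) _; rewrite !normrM.
have K0 : 0 <= K by apply: le_trans h1.
have := normr_ge0 A; have := normr_ge0 B; have := normr_ge0 (cRe w); have := normr_ge0 (cIm w).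
nra.
Qed.

Lemma le_sum1 (I : finType) (F : I -> R) i : (forall j, 0 <= F j) -> F i <= \sum_j F j.
Proof. by move=> h; rewrite (bigD1 i) //= lerDl sumr_ge0. Qed.

Variable n : nat.
Lemma mgronwall (X a : R -> 'M[C]_n) :
  mder X (fun t => X t *m a t - a t *m X t) -> X 0 = 0 ->
  (forall i j t, derivable (fun s => cRe (a s i j)) t (1:R) /\ derivable (fun s => cIm (a s i j)) t (1:R)) ->
  forall t, X t = 0.
Proof.
move=> hX h0 ha.
pose f t := \sum_(i < n) \sum_(j < n) nc (X t i j).
pose Xd t := X t *m a t - a t *m X t.
pose f' t := \sum_(i < n) \sum_(j < n) 2 * dotc (X t i j) (Xd t i j).
have hd : forall t, is_derive t (1:R) f (f' t).
  move=> t; rewrite /f /f'; apply: dsum => i; apply: dsum => j.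
  have [h1 h2] := hX t i j.
  rewrite /nc; apply: dval (dD (dM h1 h1) (dM h2 h2)) _; rewrite /dotc; ring.
have f0 : f 0 = 0.
  rewrite /f h0; apply: big1 => i _; apply: big1 => j _; by rewrite mxE /nc Re0 Im0 mulr0 addr0.
have fpos : forall t, 0 <= f t.
  by move=> t; apply: sumr_ge0 => i _; apply: sumr_ge0 => j _; exact: nc_ge0.
have Nle : forall t i j, nc (X t i j) <= f t.
  move=> t i j; apply: le_trans (le_sum1 i _) => [|k]; last first.
    by apply: sumr_ge0 => l _; exact: nc_ge0.
  by apply: (le_sum1 j) => l; exact: nc_ge0.
have hb : forall T, 0 <= T -> exists M, forall t, - T <= t <= T -> `|f' t| <= M * f t.
  move=> T hT.
  have [K HK] := @bnd_family R _ (index_enum [the finType of ('I_n * 'I_n * bool)%type])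
    (fun p t => if p.2 then cRe (a t p.1.1 p.1.2) else cIm (a t p.1.1 p.1.2)) 
    ltac:(by move=> [[i j] []] t /=; have [] := ha i j t) T hT.
  pose M := \sum_(i < n) \sum_(j < n) 2 * (\sum_(k < n) (`|K| * 2) + \sum_(k < n) (`|K| * 2)).
  exists M => t tT.
  have Ka : forall i j, `|cRe (a t i j)| <= `|K| /\ `|cIm (a t i j)| <= `|K|.
    move=> i j; split; apply: le_trans (ler_norm K).
      by have := HK (i, j, true) t; rewrite mem_index_enum /=; apply.
    by have := HK (i, j, false) t; rewrite mem_index_enum /=; apply.
  have term : forall i j, `|2 * dotc (X t i j) (Xd t i j)| <=
      2 * (\sum_(k < n) (`|K| * (2 * f t)) + \sum_(k < n) (`|K| * (2 * f t))).
    move=> i j; rewrite /Xd !mxE dotcD dotcN !dotc_sum normrM ger0_norm //.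
    apply: ler_wpM2l => //; apply: le_trans (ler_normB _ _) _.
    apply: lerD; apply: le_trans (ler_norm_sum _ _ _) _; apply: ler_sum => k _.
      apply: le_trans (dot_bound _ _ (Ka k j).1 (Ka k j).2) _.
      apply: ler_wpM2l => //; have := Nle t i j; have := Nle t i k; lra.
    rewrite mulrC; apply: le_trans (dot_bound _ _ (Ka i k).1 (Ka i k).2) _.
    apply: ler_wpM2l => //; have := Nle t i j; have := Nle t k j; lra.
  have -> : M * f t = \sum_(i < n) \sum_(j < n) 2 * (\sum_(k < n) (`|K| * (2 * f t)) + \sum_(k < n) (`|K| * (2 * f t))).
    rewrite /M big_distrl; apply: eq_bigr => i _ /=; rewrite big_distrl; apply: eq_bigr => j _ /=.
    rewrite -[LHS]mulrA; congr (2 * _); rewrite mulrDl; congr (_ + _); rewrite big_distrl; apply: eq_bigr => k _ /=; ring.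
  rewrite /f'; apply: le_trans (ler_norm_sum _ _ _) _; apply: ler_sum => i _.
  apply: le_trans (ler_norm_sum _ _ _) _; apply: ler_sum => j _.
  exact: term.
have fz := gronwall hd f0 fpos hb.
move=> t; apply/matrixP => i j; rewrite mxE.
have h1 := Nle t i j; rewrite fz in h1; have h2 := nc_ge0 (X t i j).
have hN : nc (X t i j) = 0 by apply/eqP; rewrite eq_le h1 h2.
move: hN; rewrite /nc => hN.
apply: complex_ext => /=; nra.
Qed.
End MGron.
Section Graph.
Variables (R : realType) (T : finType) (e : rel T).
Local Notation C := (R[i]).
Local Notation cRe := (@complex.Re R).
Local Notation cIm := (@complex.Im R).
Local Notation S := (simplex e).
Local Notation N := #|{: simplex e}|.
Local Notation Mat := 'M[C]_N.
Local Notation op := (op R e).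

Definition ev (i : 'I_N) : S := enum_val i.
Definition toM (A : op) : Mat := \matrix_(i, j) A (ev i) (ev j).

Lemma toM_inj A B : toM A = toM B -> A = B.
Proof.
move=> /matrixP h; apply: funext => y; apply: funext => x.
have := h (enum_rank y) (enum_rank x); by rewrite !mxE /ev !enum_rankK.
Qed.
Lemma sum_S (F : S -> C) : \sum_(z : S) F z = \sum_(k < N) F (ev k).
Proof. by rewrite (reindex (@enum_val _ {: S})) //=; exists enum_rank => k _; rewrite ?enum_valK ?enum_rankK. Qed.
Lemma toM_mul A B : toM (opmul A B) = toM A *m toM B.
Proof. by apply/matrixP => i j; rewrite !mxE /opmul sum_S; apply: eq_bigr => k _; rewrite !mxE. Qed.
Lemma toM_add A B : toM (opadd A B) = toM A + toM B.
Proof. by apply/matrixP => i j; rewrite !mxE. Qed.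
Lemma toM_sub A B : toM (opsub A B) = toM A - toM B.
Proof. by apply/matrixP => i j; rewrite !mxE. Qed.
Lemma toM_scale c A : toM (opscale c A) = c *: toM A.
Proof. by apply/matrixP => i j; rewrite !mxE. Qed.
Lemma toM_adj A : toM (opadj A) = adjM (toM A).
Proof. by apply/matrixP => i j; rewrite !mxE. Qed.

Definition sd (i : 'I_N) : int := (sdim (ev i))%:Z.
Definition grd (k : int) (M : Mat) := forall i j, sd i != sd j + k -> M i j = 0.
Definition prj (k : int) (M : Mat) : Mat := \matrix_(i, j) if sd i == sd j + k then M i j else 0.

Lemma toM_dpart A : toM (dpart A) = prj 1 (toM A).
Proof.
apply/matrixP => i j; rewrite !mxE /dpart /sd.
by rewrite -[(_ + 1)%R]PoszD eqz_nat addn1.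
Qed.
Lemma toM_bpart A : toM (bpart A) = prj 0 (toM A).
Proof. by apply/matrixP => i j; rewrite !mxE /bpart /sd addr0 eqz_nat. Qed.

Lemma prjE k l M : grd k M -> prj l M = if l == k then M else 0.
Proof.
move=> h; apply/matrixP => i j; case: (eqVneq l k) => [->|nlk]; rewrite !mxE.
  case: eqP => // hne; rewrite h //; exact/eqP.
case: eqP => // hl; rewrite h //; apply/eqP => hk; move/eqP: nlk; apply.
by rewrite -(addrI _ (etrans (esym hl) hk)).
Qed.
Lemma grd_prj k M : grd k (prj k M).
Proof. by move=> i j /negbTE h; rewrite mxE h. Qed.
Lemma grd_mul k l A B : grd k A -> grd l B -> grd (k + l) (A *m B).
Proof.
move=> hA hB i j hij; rewrite mxE; apply: big1 => z _.
case: (eqVneq (sd i) (sd z + k)) => [hk|hk]; last by rewrite hA // mul0r.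
rewrite hB ?mulr0 //; apply: contra hij => /eqP hl.
by rewrite hk hl -addrA (addrC l).
Qed.
Lemma grd_add k A B : grd k A -> grd k B -> grd k (A + B).
Proof. by move=> hA hB i j h; rewrite mxE hA // hB // addr0. Qed.
Lemma grd_opp k A : grd k A -> grd k (- A).
Proof. by move=> hA i j h; rewrite mxE hA // oppr0. Qed.
Lemma grd_scale k c A : grd k A -> grd k (c *: A).
Proof. by move=> hA i j h; rewrite mxE hA // mulr0. Qed.
Lemma grd_adj k A : grd k A -> grd (- k) (adjM A).
Proof.
move=> hA i j h; rewrite mxE hA ?conjc0 //; apply: contra h => /eqP ->.
by rewrite addrK.
Qed.
Lemma prjD k A B : prj k (A + B) = prj k A + prj k B.
Proof. by apply/matrixP => i j; rewrite !mxE; case: ifP; rewrite ?addr0. Qed.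
Lemma prjN k A : prj k (- A) = - prj k A.
Proof. by apply/matrixP => i j; rewrite !mxE; case: ifP; rewrite ?oppr0. Qed.
Lemma prjB k A B : prj k (A - B) = prj k A - prj k B.
Proof. by rewrite prjD prjN. Qed.
End Graph.
Section Graph2.
Variables (R : realType) (T : finType) (e : rel T).
Local Notation C := (R[i]).
Local Notation N := #|{: simplex e}|.
Local Notation Mat := 'M[C]_N.
Local Notation grd := (@grd R T e).
Local Notation prj := (@prj R T e).

Lemma prjZ k c (A : Mat) : prj k (c *: A) = c *: prj k A.
Proof. by apply/matrixP => i j; rewrite !mxE; case: ifP; rewrite ?mulr0. Qed.
Lemma prj_mul_eq k a b (A B : Mat) : grd a A -> grd b B -> k = a + b -> prj k (A *m B) = A *m B.
Proof. by move=> hA hB ->; rewrite (prjE _ (grd_mul hA hB)) eqxx. Qed.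
Lemma prj_mul_ne k a b (A B : Mat) : grd a A -> grd b B -> k != a + b -> prj k (A *m B) = 0.
Proof. by move=> hA hB /negbTE h; rewrite (prjE _ (grd_mul hA hB)) h. Qed.

Lemma prj_mul3 (X1 X0 Xm Y1 Y0 Ym : Mat) :
  grd 1 X1 -> grd 0 X0 -> grd (-1) Xm -> grd 1 Y1 -> grd 0 Y0 -> grd (-1) Ym ->
  prj 1 ((X1 + X0 + Xm) *m (Y1 + Y0 + Ym)) = X1 *m Y0 + X0 *m Y1 /\
  prj 0 ((X1 + X0 + Xm) *m (Y1 + Y0 + Ym)) = X1 *m Ym + X0 *m Y0 + Xm *m Y1.
Proof.
move=> a1 a0 am b1 b0 bm; rewrite !mulmxDl !mulmxDr !prjD.
rewrite (prj_mul_ne a1 b1) // (prj_mul_eq a1 b0) // (prj_mul_ne a1 bm) //.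
rewrite (prj_mul_eq a0 b1) // (prj_mul_ne a0 b0) // (prj_mul_ne a0 bm) //.
rewrite (prj_mul_ne am b1) // (prj_mul_ne am b0) // (prj_mul_ne am bm) //.
rewrite (prj_mul_ne a1 b1) // (prj_mul_ne a1 b0) // (prj_mul_eq a1 bm) //.
rewrite (prj_mul_ne a0 b1) // (prj_mul_eq a0 b0) // (prj_mul_ne a0 bm) //.
rewrite (prj_mul_eq am b1) // (prj_mul_ne am b0) // (prj_mul_ne am bm) //.
by rewrite !addr0 !add0r.
Qed.
End Graph2.
Section Comb.
Variables (R : realType) (T : finType) (e : rel T).
Local Notation S := (simplex e).
Local Notation C := (R[i]).
Local Notation d0 := (@d0 R T e).

Lemma setPE (A B : {set T}) : A = B -> forall x, (x \in A) = (x \in B).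
Proof. by move=> ->. Qed.
Definition rk (u : T) : nat := val (enum_rank u).

Lemma simplex_sub (z : S) (A : {set T}) : A \subset val z -> (0 < #|A|)%N -> is_simplex e A.
Proof.
move=> sAz hA; rewrite /is_simplex hA /=.
have := valP z; rewrite /is_simplex => /andP [_ /forallP hz].
apply/forallP => u; apply/implyP => uA; apply/forallP => v; apply/implyP => vA.
have /implyP /(_ (fintype.subsetP sAz u uA)) /forallP /(_ v) /implyP := hz u.
by apply; apply: (fintype.subsetP sAz).
Qed.

Lemma vposD1 (Z : {set T}) u w : w \in Z -> vpos Z u = ((rk w < rk u) + vpos (Z :\ w) u)%N.
Proof.
move=> wZ; rewrite /vpos (cardsD1 w) !inE wZ /=; congr (_ + _)%N.
by apply: eq_card => t; rewrite !inE andbA.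
Qed.

Lemma d0_one (y x : S) u : val x \subset val y -> val y :\: val x = [set u] ->
  d0 y x = (-1) ^+ vpos (val y) u.
Proof.
move=> sxy hD; rewrite /d0 sxy /=.
have c1 : #|val y| = (#|val x|).+1.
  have := cards1 u; rewrite -hD cardsD (finset.setIidPr sxy) => h.
  have := subset_leq_card sxy; lia.
by rewrite c1 eqxx hD big_set1.
Qed.

Lemma d0_nz (y x : S) : d0 y x != 0 -> val x \subset val y /\ #|val y| = (#|val x|).+1.
Proof. by rewrite /d0; case: ifP => [/andP [h1 /eqP h2] _|]; [| rewrite eqxx]. Qed.

Lemma DsetD1 (Z : {set T}) v : v \in Z -> Z :\: (Z :\ v) = [set v].
Proof.
move=> vZ; apply/finset.setP => t; rewrite !inE; case: (eqVneq t v) => [->|tv] /=; first by rewrite vZ.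
by case: (t \in Z).
Qed.

Lemma setD1D (Z X : {set T}) v w : v != w -> Z :\: X = [set v; w] -> (Z :\ v) :\: X = [set w].
Proof.
move=> vw hD; apply/finset.setP => t; have := setPE hD t; rewrite !inE.
case: (eqVneq t v) => [->|tv] /=.
  by rewrite (negbTE vw) andbF.
by rewrite andbC => ->.
Qed.

Lemma d0_sq (z x : S) : \sum_(y : S) d0 z y * d0 y x = 0.
Proof.
set Z := val z; set X := val x.
have hzero : forall y : S, d0 z y * d0 y x != 0 ->
    [/\ val y \subset Z, #|Z| = (#|val y|).+1, X \subset val y & #|val y| = (#|X|).+1].
  move=> y; rewrite mulf_eq0 negb_or => /andP [/d0_nz [h1 h2] /d0_nz [h3 h4]].
  by [].
case: (boolP ((X \subset Z) && (#|Z| == (#|X|).+2))) => [/andP [sXZ /eqP cZ]|hn]; last first.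
  apply: big1 => y _; apply/eqP; case: (eqVneq (d0 z y * d0 y x) 0) => // /hzero [h1 h2 h3 h4].
  by move: hn; rewrite (fintype.subset_trans h3 h1) h2 h4 eqxx.
have c2 : #|Z :\: X| == 2.
  by rewrite cardsD (finset.setIidPr sXZ) cZ; apply/eqP; lia.
have /cards2P [v [w [vw hD]]] := c2.
have hvw : forall u, (u \notin X) && (u \in Z) = (u == v) || (u == w).
  by move=> u; have := setPE hD u; rewrite !inE.
have /andP [vX vZ] : (v \notin X) && (v \in Z) by rewrite hvw eqxx.
have /andP [wX wZ] : (w \notin X) && (w \in Z) by rewrite hvw eqxx orbT.
have cv : #|Z :\ v| = (#|X|).+1 by have := cardsD1 v Z; rewrite vZ cZ; lia.
have cw : #|Z :\ w| = (#|X|).+1 by have := cardsD1 w Z; rewrite wZ cZ; lia.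
have s1 : is_simplex e (Z :\ v) by apply: simplex_sub; [exact: subsetDl | rewrite cv].
have s2 : is_simplex e (Z :\ w) by apply: simplex_sub; [exact: subsetDl | rewrite cw].
pose y1 : S := exist _ (Z :\ v) s1.
pose y2 : S := exist _ (Z :\ w) s2.
have sX1 : X \subset Z :\ v.
  apply/fintype.subsetP => t tX; rewrite !inE (fintype.subsetP sXZ) // andbT.
  by apply: contraNneq vX => <-.
have sX2 : X \subset Z :\ w.
  apply/fintype.subsetP => t tX; rewrite !inE (fintype.subsetP sXZ) // andbT.
  by apply: contraNneq wX => <-.
have n21 : y2 != y1.
  apply/eqP => /(congr1 val) /= /finset.setP /(_ w); rewrite !inE eqxx wZ /=.
  by rewrite eq_sym (negbTE vw).
rewrite (bigD1 y1) // (bigD1 y2); last by rewrite n21.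
rewrite big1 ?addr0; last first.
  move=> y /andP [ne2 ne1]; apply/eqP; apply: contraR (ne1) => /hzero [h1 h2 h3 h4].
  have /cards1P [u hu] : #|Z :\: val y| == 1.
    by rewrite cardsD (finset.setIidPr h1) h2 subSnn.
  have /andP [uY uZ] : (u \notin val y) && (u \in Z) by have := setPE hu u; rewrite !inE eqxx.
  have uX : u \notin X by apply: contra uY; apply: (fintype.subsetP h3).
  have hY : val y = Z :\ u.
    apply/finset.setP => t; have := setPE hu t; rewrite !inE => ht.
    case: (boolP (t \in val y)) => tY.
      rewrite (fintype.subsetP h1) // andbT; apply/esym; by apply: contraTneq tY => ->.
    have tY1 : (t \notin sval y) := tY; move: ht; rewrite tY1 /= => ->; by case: (t == u).
  have : (u == v) || (u == w) by rewrite -hvw uX uZ.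
  case/orP => /eqP hu'.
    have hy : y = y1 by apply: val_inj; rewrite /= hY hu'.
    by move: ne2; rewrite hy eqxx.
  by apply/eqP; apply: val_inj; rewrite /= hY hu'.
rewrite (@d0_one z y1 v) /=; [|exact: subsetDl|exact: DsetD1].
rewrite (@d0_one y1 x w) /=; [|exact: sX1|exact: setD1D].
rewrite (@d0_one z y2 w) /=; [|exact: subsetDl|exact: DsetD1].
rewrite (@d0_one y2 x v) /=; [|exact: sX2|]; last first.
  apply: (@setD1D Z X w v); first by rewrite eq_sym.
  by rewrite hD; apply/finset.setP => t; rewrite !inE orbC.
rewrite (vposD1 v wZ) (vposD1 w vZ) !exprD.
case: (ltngtP (rk v) (rk w)) => h /=; rewrite ?expr0 ?expr1; try ring.
by move: vw; rewrite (enum_rank_inj (val_inj h)) eqxx.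
Qed.
End Comb.
Ltac mnorm := repeat progress (rewrite ?mulmxDl ?mulmxDr ?mulmxBl ?mulmxBr ?mulmxN ?mulNmx ?mulmxA ?mul0mx ?mulmx0 -?scalemxAl -?scalemxAr).
Ltac genprod := repeat match goal with |- context [mulmx ?A ?B] => let X := fresh "X" in set X := mulmx A B; clearbody X end.
Ltac mring := mnorm; genprod; apply/matrixP => ? ?; rewrite !mxE; ring.

Section AdjId.
Variable R : realType.
Local Notation C := (R[i]).
Variable n : nat.
Local Notation Mat := 'M[C]_n.
Implicit Types A B d b e Q Qs : Mat.

Lemma adjM_mul A B : adjM (A *m B) = adjM B *m adjM A.
Proof.
apply/matrixP => i j; rewrite !mxE rmorph_sum; apply: eq_bigr => k _.
by rewrite !mxE rmorphM mulrC.
Qed.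
Lemma adjMK A : adjM (adjM A) = A.
Proof. by apply/matrixP => i j; rewrite !mxE conjcK. Qed.
Lemma adjMD A B : adjM (A + B) = adjM A + adjM B.
Proof. by apply/matrixP => i j; rewrite !mxE rmorphD. Qed.
Lemma adjMN A : adjM (- A) = - adjM A.
Proof. by apply/matrixP => i j; rewrite !mxE rmorphN. Qed.
Lemma adjMB A B : adjM (A - B) = adjM A - adjM B.
Proof. by rewrite adjMD adjMN. Qed.
Lemma adjMZ c A : adjM (c *: A) = c^*%C *: adjM A.
Proof. by apply/matrixP => i j; rewrite !mxE rmorphM. Qed.
Lemma adjM0 : adjM (0 : Mat) = 0.
Proof. by apply/matrixP => i j; rewrite !mxE rmorph0. Qed.

Lemma Id_prj1 d b (sb : C) :
  (d *m b + (sb *: b) *m d) - (d *m (sb *: b) + b *m d) = (1 - sb) *: (d *m b - b *m d).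
Proof. mring. Qed.
Lemma Id_prj0 d b e (sb : C) :
  (d *m e + (sb *: b) *m b + (- e) *m d) - (d *m (- e) + b *m (sb *: b) + e *m d)
  = 2 *: (d *m e - e *m d).
Proof. mring. Qed.
Lemma Id_P d b (c : C) :
  (c *: (d *m b - b *m d)) *m d + d *m (c *: (d *m b - b *m d))
  = (d *m d) *m (c *: b) - (c *: b) *m (d *m d).
Proof. mring. Qed.
Lemma Id_Q d b e (c : C) :
  ((c *: (d *m b - b *m d)) *m b + d *m (2 *: (d *m e - e *m d)))
  + ((2 *: (d *m e - e *m d)) *m d + b *m (c *: (d *m b - b *m d)))
  = ((d *m b + b *m d) *m (c *: b) - (c *: b) *m (d *m b + b *m d))
    + 2 *: ((d *m d) *m e - e *m (d *m d)).
Proof. mring. Qed.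
Lemma Id_R d b e (sb : C) :
  let c := 1 - sb in let cb := 1 + sb in
  let Q := d *m b + b *m d in let Qs := b *m e + e *m b in
  (((c *: (d *m b - b *m d)) *m e + d *m (cb *: (b *m e - e *m b)))
  + ((cb *: (b *m e - e *m b)) *m d + e *m (c *: (d *m b - b *m d))))
  + ((2 *: (d *m e - e *m d)) *m b + b *m (2 *: (d *m e - e *m d)))
  = c *: (Q *m e) + (2 * cb) *: (Q *m e) - cb *: (d *m Qs) - cb *: (Qs *m d)
    + c *: (e *m Q) - (2 * c) *: (Qs *m d) + 2 *: (d *m Qs) - 2 *: (Q *m e)
    - 2 *: (e *m Q) + 2 *: (Qs *m d).
Proof. move=> c cb Q Qs; rewrite /c /cb /Q /Qs. mring. Qed.
Lemma Id_D2 d b e :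
  (d + e + b) *m (d + e + b) = d *m d + (d *m b + b *m d) + (d *m e + e *m d + b *m b)
    + e *m e + (b *m e + e *m b).
Proof. mring. Qed.
End AdjId.
Section Fin.
Variables (R : realType) (T : finType) (e : rel T).
Local Notation C := (R[i]).
Local Notation N := #|{: simplex e}|.
Local Notation Mat := 'M[C]_N.
Local Notation d0 := (@d0 R T e).
Local Notation toM := (@toM R T e).
Local Notation prj := (@prj R T e).
Local Notation grd := (@grd R T e).

Lemma mder_prj k F F' : mder F F' -> mder (fun s => prj k (F s)) (fun s => prj k (F' s)).
Proof.
move=> h t i j.
apply: (cder_ext (f := fun s => if sd i == sd j + k then F s i j else 0)) => [s|]; first by rewrite mxE.
rewrite mxE; case: ifP => _; [exact: h | exact: cder_cst].
Qed.

Lemma grd_d0 : grd 1 (toM d0).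
Proof.
move=> i j h; rewrite mxE; case: (eqVneq (d0 (ev i) (ev j)) 0) => // hnz.
have [_ hc] := d0_nz hnz.
have hx : (0 < #|val (ev j)|)%N by have := valP (ev j); rewrite /is_simplex => /andP [].
move: h; rewrite /sd /sdim hc /= -PoszD addn1 prednK //.
by rewrite eqxx.
Qed.

Lemma d0sqM : toM d0 *m toM d0 = 0.
Proof. by rewrite -toM_mul; apply/matrixP => i j; rewrite !mxE /opmul d0_sq. Qed.

Lemma conj_c (beta : R) : (1 - Complex 0 beta)^*%C = 1 + Complex 0 beta.
Proof. by apply: complex_ext => /=; lra. Qed.

Lemma Id_R2 (d b ee : Mat) (sb : C) :
  (((1 - sb) *: (d *m b - b *m d)) *m ee + d *m ((1 + sb) *: (b *m ee - ee *m b)))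
  + (((1 + sb) *: (b *m ee - ee *m b)) *m d + ee *m ((1 - sb) *: (d *m b - b *m d)))
  + ((2 *: (d *m ee - ee *m d)) *m b + b *m (2 *: (d *m ee - ee *m d)))
  = (1 - sb) *: ((d *m b + b *m d) *m ee) + (2 * (1 + sb)) *: ((d *m b + b *m d) *m ee)
    - (1 + sb) *: (d *m (b *m ee + ee *m b)) - (1 + sb) *: ((b *m ee + ee *m b) *m d)
    + (1 - sb) *: (ee *m (d *m b + b *m d)) - (2 * (1 - sb)) *: ((b *m ee + ee *m b) *m d)
    + 2 *: (d *m (b *m ee + ee *m b)) - 2 *: ((d *m b + b *m d) *m ee)
    - 2 *: (ee *m (d *m b + b *m d)) + 2 *: ((b *m ee + ee *m b) *m d).
Proof. exact: (Id_R d b ee sb). Qed.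
End Fin.
Unset Implicit Arguments.
Theorem mainTheorem6 (R : realType) (T : finType) (e : rel T)
  (hG : simple_graph e) (beta : R) (D : R -> op R e)
  (hD : dirac_deformation beta D) :
  forall t : R, opmul (D t) (D t) = @Lap R T e.
Proof.
case: hD => hD0 [hform hder] t.
pose sb : R[i] := Complex 0 beta.
pose c : R[i] := 1 - sb.
pose d u := @prj R T e 1 (toM (D u)).
pose b u := @prj R T e 0 (toM (D u)).
pose dd u := adjM (d u).
have gd u : grd 1 (d u) by exact: grd_prj.
have gb u : grd 0 (b u) by exact: grd_prj.
have gdd u : grd (-1) (dd u) by exact: grd_adj (gd u).
have hDm u : toM (D u) = d u + dd u + b u.
  by rewrite {1}(hform u) !toM_add toM_adj toM_dpart toM_bpart.
have hBm u : toM (Bop beta (D u)) = d u - dd u + sb *: b u.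
  by rewrite /Bop toM_add toM_sub toM_adj toM_scale toM_dpart toM_bpart.
have hDer : mder (fun u => toM (D u))
    (fun u => toM (Bop beta (D u)) *m toM (D u) - toM (D u) *m toM (Bop beta (D u))).
  move=> u i j; have := hder u (ev i) (ev j) => /= [[h1 h2]].
  rewrite /cder; split.
    apply: (dext (f := fun s => complex.Re (D s (ev i) (ev j)))) => [s|]; first by rewrite mxE.
    by rewrite -!toM_mul -toM_sub mxE.
  apply: (dext (f := fun s => complex.Im (D s (ev i) (ev j)))) => [s|]; first by rewrite mxE.
  by rewrite -!toM_mul -toM_sub mxE.
have e1 u : d u - dd u + sb *: b u = d u + sb *: b u + - dd u by rewrite addrAC.
have e2 u : d u + dd u + b u = d u + b u + dd u by rewrite addrAC.
have hd' : mder d (fun u => c *: (d u *m b u - b u *m d u)).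
  apply: mder_val (mder_prj 1 hDer) _ => u.
  rewrite hBm hDm e1 e2 prjB.
  have [p1 _] := prj_mul3 (gd u) (grd_scale sb (gb u)) (grd_opp (gdd u)) (gd u) (gb u) (gdd u).
  have [q1 _] := prj_mul3 (gd u) (gb u) (gdd u) (gd u) (grd_scale sb (gb u)) (grd_opp (gdd u)).
  by rewrite p1 q1 Id_prj1.
have hb' : mder b (fun u => 2 *: (d u *m dd u - dd u *m d u)).
  apply: mder_val (mder_prj 0 hDer) _ => u.
  rewrite hBm hDm e1 e2 prjB.
  have [_ p0] := prj_mul3 (gd u) (grd_scale sb (gb u)) (grd_opp (gdd u)) (gd u) (gb u) (gdd u).
  have [_ q0] := prj_mul3 (gd u) (gb u) (gdd u) (gd u) (grd_scale sb (gb u)) (grd_opp (gdd u)).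
  by rewrite p0 q0 Id_prj0.
have hb0 : b 0 = 0.
  rewrite /b hD0 /D0 toM_add toM_adj prjD (prjE _ (@grd_d0 R T e)) (prjE _ (grd_adj (@grd_d0 R T e))).
  by rewrite /= addr0.
have hd00 : d 0 = toM (@d0 R T e).
  rewrite /d hD0 /D0 toM_add toM_adj prjD (prjE _ (@grd_d0 R T e)) (prjE _ (grd_adj (@grd_d0 R T e))).
  by rewrite /= addr0.
have ddK u : adjM (dd u) = d u by rewrite /dd adjMK.
have hherm u : adjM (b u) = b u.
  have H : forall s, b s - adjM (b s) = b 0 - adjM (b 0).
    apply: (mder_cst0 (F := fun s => b s - adjM (b s))).
    have HH := mder_sub hb' (mder_adj hb'); apply: (mder_val HH) => s.
    by rewrite adjMZ adjMB !adjM_mul !ddK rmorph_nat subrr.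
  have := H u; rewrite hb0 adjM0 subr0 => /eqP; rewrite subr_eq0 => /eqP hh.
  by rewrite -hh.
have ader : forall i j s, derivable (fun u => complex.Re ((c *: b u) i j)) s (1:R) /\
    derivable (fun u => complex.Im ((c *: b u) i j)) s (1:R).
  move=> i j s; have [h1 h2] := mder_scale c hb' s i j.
  by split; [case: h1 | case: h2].
have hP u : d u *m d u = 0.
  apply: (mgronwall (X := fun u => d u *m d u) (a := fun u => c *: b u)) => //.
    by have HH := mder_mul hd' hd'; apply: (mder_val HH) => s; exact: Id_P.
  by rewrite hd00 d0sqM.
have hQ u : d u *m b u + b u *m d u = 0.
  apply: (mgronwall (X := fun u => d u *m b u + b u *m d u) (a := fun u => c *: b u)) => //.
    have HH := mder_add (mder_mul hd' hb') (mder_mul hb' hd'); apply: (mder_val HH) => s.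
    by rewrite Id_Q hP mul0mx mulmx0 subrr scaler0 addr0.
  by rewrite hb0 mulmx0 mul0mx addr0.
have hQs u : b u *m dd u + dd u *m b u = 0.
  apply: etrans (_ : adjM (d u *m b u + b u *m d u) = _); last by rewrite hQ adjM0.
  by rewrite adjMD !adjM_mul hherm addrC.
have hPs u : dd u *m dd u = 0 by rewrite -[dd u]/(adjM (d u)) -adjM_mul hP adjM0.
have hdd' : mder dd (fun u => (1 + sb) *: (b u *m dd u - dd u *m b u)).
  have HH := mder_adj hd'; apply: (mder_val HH) => s.
  by rewrite adjMZ adjMB !adjM_mul hherm conj_c.
pose Rm u := d u *m dd u + dd u *m d u + b u *m b u.
have hR : forall u, Rm u = Rm 0.
  apply: mder_cst0.
  have HH := mder_add (mder_add (mder_mul hd' hdd') (mder_mul hdd' hd')) (mder_mul hb' hb'); apply: (mder_val HH) => s.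
  rewrite Id_R2 hQ hQs.
  by rewrite ?mul0mx ?mulmx0 ?scaler0 ?subr0 ?addr0 ?sub0r ?oppr0 ?add0r.
have hD2 u : toM (D u) *m toM (D u) = Rm u.
  by rewrite hDm Id_D2 hP hQ hPs hQs !addr0 add0r.
apply: (@toM_inj R T e); rewrite toM_mul hD2 hR -hD2 hD0.
by rewrite /Lap toM_mul.
Qed.
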